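(* Let $\mathcal{D}$ be a distribution over subsets of $V$ with $\mathbb{E}_{S\sim\mathcal{D}}[|S|]>0$. If $$\frac{\mathbb{E}_{S\sim\mathcal{D}}[\mathrm{Cut}(S,V\setminus S)]}{\mathbb{E}_{S\sim\mathcal{D}}[|V\setminus S|]}\ \ge\ \frac{\mathbb{E}_{S\sim\mathcal{D}}[\mathrm{Induced}(S)]}{\mathbb{E}_{S\sim\mathcal{D}}[|S|]},$$ where the left-hand side is interpreted as $+\infty$ when $\mathcal{D}$ is the point mass at $V$, then for $\alpha=\mathbb{E}_{S\sim\mathcal{D}}[|S|]/\mathbb{E}_{S\sim\mathcal{D}}[\mathrm{Induced}(S)]$ the identity-independent signaling scheme with signal space $\{0,\alpha\}$ that draws $S\sim\mathcal{D}$ and sets $s_v=\alpha\cdot\mathbf 1\{v\in S\}$ is persuasive, and its cost equals $\frac{(\mathbb{E}_{S\sim\mathcal{D}}[|S|])^2}{\mathbb{E}_{S\sim\mathcal{D}}[\mathrm{Induced}(S)]}\le\mathbb{E}_{S\sim\mathcal{D}}[|S|]$.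
   Context: Setting. $V$ is a finite set of $n$ task types and $W=(W_{u,v})_{u,v\in V}$ is a symmetric matrix with entries in $[0,1]$ and $W_{v,v}=1$. For $S\subseteq V$: $\mathrm{Cut}(S,V\setminus S)=\sum_{u\in S}\sum_{v\in V\setminus S}W_{u,v}$ and $\mathrm{Induced}(S)=\sum_{u\in S}\sum_{v\in S}W_{u,v}$ (diagonal terms included). There are $n$ agents; the type profile $t=(t_1,\dots,t_n)$ is a uniformly random bijection $[n]\to V$. An identity-independent signaling scheme with finite signal space $\Sigma\subset[0,1]$ is a distribution on $\Sigma^V$: $s\sim$ it is drawn independently of $t$ and agent $i$ privately receives $s_{t_i}$. For agent $i$, a signal $\theta\in\Sigma$ with $\Pr[s_{t_i}=\theta]>0$ and $x\ge0$, let $Q_i(x\mid\theta)=\mathbb{E}\big[x+\sum_{v'\neq t_i}W_{t_i,v'}s_{v'}\,\big|\,s_{t_i}=\theta\big]$. The scheme is persuasive if for every agent $i$ and every such $\theta$: $Q_i(\theta\mid\theta)\ge1$ and $\theta=\min\{x\ge0:Q_i(x\mid\theta)\ge1\}$. Its cost is $\mathbb{E}[\|s\|_1]$. *)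

(* Defs.v *)
From mathcomp Require Import all_boot all_order all_algebra.
Set Implicit Arguments. Unset Strict Implicit. Unset Printing Implicit Defensive.
Import Order.TTheory GRing.Theory Num.Theory.
Local Open Scope ring_scope.

Definition Cut (R : realFieldType) (V : finType) (W : V -> V -> R) (S : {set V}) : R :=
  \sum_(u in S) \sum_(v in ~: S) W u v.
Definition Induced (R : realFieldType) (V : finType) (W : V -> V -> R) (S : {set V}) : R :=
  \sum_(u in S) \sum_(v in S) W u v.

Definition Exp (R : realFieldType) (V : finType) (D : {set V} -> R) (f : {set V} -> R) : R :=
  \sum_(S : {set V}) D S * f S.

(* Type profiles: bijections from the agents [n] = 'I_#|V| to V (uniform). *)
Definition bijs (V : finType) : {set {ffun 'I_#|V| -> V}} :=
  [set t : {ffun 'I_#|V| -> V} | injectiveb t].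

(* An identity-independent signaling scheme is given by a finite probability
   space (Omega, P) and the random signal vector s : Omega -> V -> R;
   the signal space Sigma is a finite subset (seq) of [0,1]. *)
Definition is_scheme (R : realFieldType) (V Omega : finType) (Sigma : seq R)
    (P : Omega -> R) (s : Omega -> V -> R) : Prop :=
  (forall th, th \in Sigma -> 0 <= th <= 1) /\
  (forall w, 0 <= P w) /\ (\sum_w P w = 1) /\
  (forall w v, s w v \in Sigma).

(* Pr[ s_{t_i} = th ], over t uniform bijection and s independent of t. *)
Definition sig_prob (R : realFieldType) (V Omega : finType)
    (P : Omega -> R) (s : Omega -> V -> R) (i : 'I_#|V|) (th : R) : R :=
  \sum_(t in bijs V) \sum_(w : Omega)
     (#|bijs V|%:R)^-1 * P w * (s w (t i) == th)%:R.

(* Q_i(x | th) = E[ x + sum_{v' <> t_i} W_{t_i,v'} s_{v'} | s_{t_i} = th ]. *)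
Definition Qfun (R : realFieldType) (V Omega : finType) (W : V -> V -> R)
    (P : Omega -> R) (s : Omega -> V -> R) (i : 'I_#|V|) (x th : R) : R :=
  (\sum_(t in bijs V) \sum_(w : Omega)
     (#|bijs V|%:R)^-1 * P w * (s w (t i) == th)%:R *
       (x + \sum_(v | v != t i) W (t i) v * s w v))
  / sig_prob P s i th.

Definition persuasive (R : realFieldType) (V Omega : finType) (W : V -> V -> R)
    (Sigma : seq R) (P : Omega -> R) (s : Omega -> V -> R) : Prop :=
  forall (i : 'I_#|V|) (th : R), th \in Sigma -> 0 < sig_prob P s i th ->
    1 <= Qfun W P s i th th /\
    (0 <= th /\
     forall x, 0 <= x -> 1 <= Qfun W P s i x th -> th <= x).

Definition cost (R : realFieldType) (V Omega : finType)
    (P : Omega -> R) (s : Omega -> V -> R) : R :=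
  \sum_(w : Omega) P w * \sum_(v : V) `|s w v|.

(* Main.v *)
Require Import Defs.
From mathcomp Require Import all_boot all_order all_algebra all_fingroup.
Import Order.TTheory GRing.Theory Num.Theory.
Local Open Scope ring_scope.

Lemma card_fib (V : finType) (i : 'I_#|V|) (u u' : V) :
  (#|[set t in bijs V | t i == u]| <= #|[set t in bijs V | t i == u']|)%N.
Proof.
pose f := fun t : {ffun 'I_#|V| -> V} => [ffun j => tperm u u' (t j)].
have fK : cancel f f by move=> t; apply/ffunP => j; rewrite !ffunE tpermK.
rewrite -(card_imset _ (can_inj fK)); apply: subset_leq_card.
apply/subsetP => y /imsetP [t]; rewrite !inE => /andP [ht /eqP hti] ->.
rewrite /f ffunE hti tpermL eqxx andbT.
apply/injectiveP => j k; rewrite !ffunE => /perm_inj; exact: (injectiveP _ ht).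
Qed.

Lemma sum_bijs (R : pzRingType) (V : finType) (i : 'I_#|V|) (u0 : V) (F : V -> R) :
  \sum_(t in bijs V) F (t i) = #|[set t in bijs V | t i == u0]|%:R * \sum_u F u.
Proof.
rewrite (partition_big (fun t : {ffun 'I_#|V| -> V} => t i) predT (F := fun t : {ffun 'I_#|V| -> V} => F (t i))) //= mulr_sumr; apply: eq_bigr => u _.
have -> : #|[set t in bijs V | t i == u0]| = #|[set t in bijs V | t i == u]|.
  by apply/eqP; rewrite eqn_leq !card_fib.
rewrite -[#|[set t in bijs V | t i == u]|]sum1_card natr_sum mulr_suml.
rewrite [RHS](eq_bigl (fun t => (t \in bijs V) && (t i == u))); last by move=> t; rewrite inE.
by apply: eq_bigr => t /andP [_ /eqP ->]; rewrite mul1r.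
Qed.
Arguments sum_bijs {R V} i u0 F.
From mathcomp Require Import ring lra.

Lemma sig_prob_eq (R : realFieldType) (V Omega : finType) (P : Omega -> R)
  (s : Omega -> V -> R) (i : 'I_#|V|) (u0 : V) th :
  sig_prob P s i th = (#|bijs V|%:R)^-1 * #|[set t in bijs V | t i == u0]|%:R *
     \sum_u \sum_w P w * (s w u == th)%:R.
Proof.
rewrite /sig_prob (sum_bijs i u0 (fun u => \sum_w (#|bijs V|%:R)^-1 * P w * (s w u == th)%:R)).
rewrite -[RHS]mulrA [RHS]mulrCA; congr (_ * _); rewrite mulr_sumr; apply: eq_bigr => u _.
rewrite mulr_sumr; apply: eq_bigr => w _; by rewrite !mulrA.
Qed.

Lemma Qfun_eq (R : realFieldType) (V Omega : finType) (W : V -> V -> R) (P : Omega -> R)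
  (s : Omega -> V -> R) (i : 'I_#|V|) (u0 : V) x th :
  sig_prob P s i th != 0 ->
  Qfun W P s i x th = x + (\sum_u \sum_w P w * (s w u == th)%:R *
        \sum_(v | v != u) W u v * s w v) / (\sum_u \sum_w P w * (s w u == th)%:R).
Proof.
move=> h; rewrite /Qfun; move: h; rewrite (@sig_prob_eq _ _ _ P s i u0 th).
set k := (#|bijs V|%:R)^-1; set c := #|[set t in bijs V | t i == u0]|%:R.
set SH := \sum_u _; set SE := \sum_u _ => h.
rewrite (sum_bijs i u0 (fun u => \sum_w k * P w * (s w u == th)%:R *
     (x + \sum_(v | v != u) W u v * s w v))).
have -> : \sum_u \sum_w k * P w * (s w u == th)%:R *
     (x + \sum_(v | v != u) W u v * s w v) = k * (x * SH + SE).
  rewrite /SH /SE mulr_sumr -big_split mulr_sumr; apply: eq_bigr => u _.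
  rewrite mulr_sumr -big_split mulr_sumr; apply: eq_bigr => w _ /=; ring.
move: h; rewrite !mulf_eq0 !negb_or => /andP [/andP [hk hc] hS].
field; rewrite hk hc hS //.
Qed.

Lemma sum_neq (R : realFieldType) (V : finType) (u : V) (F : V -> R) :
  \sum_(v | v != u) F v = \sum_v F v - F u.
Proof. by rewrite [\sum_v F v](bigD1 u) //= addrC addrK. Qed.

Lemma sum_ind (R : realFieldType) (V : finType) (A : {set V}) (F : V -> R) :
  \sum_v F v * (v \in A)%:R = \sum_(v in A) F v.
Proof. by rewrite [RHS]big_mkcond /=; apply: eq_bigr => v _; case: (v \in A); rewrite ?mulr1 ?mulr0. Qed.

Lemma sum_ind1 (R : realFieldType) (V : finType) (A : {set V}) :
  \sum_v ((v \in A)%:R : R) = #|A|%:R.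
Proof.
rewrite -sum1_card natr_sum [RHS]big_mkcond /=; apply: eq_bigr => v _; by case: (v \in A).
Qed.

Lemma sum_ind_l (R : realFieldType) (V : finType) (A : {set V}) (c : R) (F : V -> R) :
  \sum_u c * (u \in A)%:R * F u = c * \sum_(u in A) F u.
Proof. by rewrite -sum_ind mulr_sumr; apply: eq_bigr => u _; rewrite mulrAC -mulrA. Qed.

Lemma inner (R : realFieldType) (V : finType) (W : V -> V -> R) (a : R) (w : {set V}) (u : V) :
  \sum_(v | v != u) W u v * (a * (v \in w)%:R) =
  a * \sum_(v in w) W u v - W u u * (a * (u \in w)%:R).
Proof.
rewrite sum_neq; congr (_ - _); rewrite -sum_ind mulr_sumr; apply: eq_bigr => v _.
by rewrite mulrCA.
Qed.

Theorem lemma3p4 (R : realFieldType) (V : finType) (W : V -> V -> R)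
    (D : {set V} -> R) :
  (forall u v, W u v = W v u) ->
  (forall u v, 0 <= W u v <= 1) ->
  (forall v, W v v = 1) ->
  (forall S, 0 <= D S) -> \sum_(S : {set V}) D S = 1 ->
  0 < Exp D (fun S => #|S|%:R) ->
  (D setT = 1 \/
   Exp D (Induced W) / Exp D (fun S => #|S|%:R)
     <= Exp D (Cut W) / Exp D (fun S => #|~: S|%:R)) ->
  let alpha := Exp D (fun S => #|S|%:R) / Exp D (Induced W) in
  let s := fun (S : {set V}) (v : V) => alpha * (v \in S)%:R in
  is_scheme [:: 0; alpha] D s /\
  persuasive W [:: 0; alpha] D s /\
  cost D s = Exp D (fun S => #|S|%:R) ^+ 2 / Exp D (Induced W) /\
  Exp D (fun S => #|S|%:R) ^+ 2 / Exp D (Induced W) <= Exp D (fun S => #|S|%:R).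
Proof.
move=> Wsym W01 Wd D0 D1 ES0 Hyp alpha s.
have aE : alpha = Exp D (fun S => #|S|%:R) / Exp D (Induced W) by [].
have sE : s = fun (S : {set V}) (v : V) => alpha * (v \in S)%:R by [].
clearbody s alpha.
set ES := Exp D (fun S => #|S|%:R) in ES0 Hyp aE *.
set EI := Exp D (Induced W) in Hyp aE *.
set EC := Exp D (Cut W) in Hyp *.
set EN := Exp D (fun S => #|~: S|%:R) in Hyp *.
have W0 u v : 0 <= W u v by case/andP: (W01 u v).
have hI (S : {set V}) : #|S|%:R <= Induced W S.
  rewrite /Induced -sum1_card natr_sum; apply: ler_sum => u uS.
  rewrite (bigD1 u) //= Wd lerDl; apply: sumr_ge0 => v _; exact: W0.
have hEI : ES <= EI by apply: ler_sum => S _; apply: ler_wpM2l.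
have EI0 : 0 < EI by exact: lt_le_trans hEI.
have a0 : 0 < alpha by rewrite aE divr_gt0.
have a1 : alpha <= 1 by rewrite aE ler_pdivrMr // mul1r.
have aEI : alpha * EI = ES by rewrite aE divfK // gt_eqF.
have hcost : cost D s = alpha * ES.
  rewrite /cost /ES /Exp [RHS]mulr_sumr; apply: eq_bigr => w _.
  rewrite sE /= [RHS]mulrCA -sum_ind1 [X in _ = _ * X]mulr_sumr; congr (_ * _).
  apply: eq_bigr => v _.
  by rewrite ger0_norm // mulr_ge0 ?ler0n // ltW.
have hcost2 : ES ^+ 2 / EI = alpha * ES by rewrite aE expr2 mulrAC.
split; last split; last split.
- split; first by move=> th; rewrite !inE => /orP [] /eqP ->; rewrite ?lexx ?ler01 ?a1 ?ltW.
  split=> //; split=> // w v; rewrite sE !inE.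
  by case: (v \in w); rewrite ?mulr1 ?mulr0 eqxx ?orbT.
- move=> i th hth hsp.
  have /card_gt0P [u0 _] : (0 < #|V|)%N by apply: leq_ltn_trans (leq0n i) (ltn_ord i).
  have hne : sig_prob D s i th != 0 by rewrite gt_eqF.
  have SH0 : 0 < \sum_u \sum_w D w * (s w u == th)%:R.
    move: hsp; rewrite (@sig_prob_eq _ _ _ D s i u0 th) => hsp.
    rewrite lt_def; apply/andP; split.
      by apply: contraTneq hsp => ->; rewrite mulr0 ltxx.
    by apply: sumr_ge0 => u _; apply: sumr_ge0 => w _; rewrite mulr_ge0.
  have QE x := (@Qfun_eq _ _ _ W D s i u0 x th hne).
  move: SH0 QE; set SH := \sum_u _; set SE := \sum_u _ => SH0 QE.
  move: hth; rewrite !inE => /orP [/eqP th0 | /eqP tha].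
  + subst th.
    have ind w u : ((s w u == 0)%:R : R) = (u \in ~: w)%:R.
      by rewrite sE inE; case: (u \in w); rewrite /= ?mulr1 ?mulr0 ?eqxx ?gt_eqF.
    have hSH : SH = EN.
      rewrite /SH /EN /Exp exchange_big /=; apply: eq_bigr => w _.
      rewrite -sum_ind1 mulr_sumr; apply: eq_bigr => u _; by rewrite ind.
    have hSE : SE = alpha * EC.
      rewrite /SE /EC /Exp exchange_big /= mulr_sumr; apply: eq_bigr => w _.
      under eq_bigr => u _ do rewrite ind. rewrite sE /=. under eq_bigr => u _ do rewrite inner.
      rewrite sum_ind_l.
      rewrite (eq_bigr (fun u => alpha * \sum_(v in w) W u v)); last first.
        by move=> u; rewrite inE => /negbTE ->; rewrite !mulr0 subr0.
      rewrite -mulr_sumr mulrCA /Cut exchange_big /=; congr (_ * (_ * _)).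
      by apply: eq_bigr => u _; apply: eq_bigr => v _; exact: Wsym.
    rewrite hSH hSE in SH0 QE.
    split; last by split=> // x hx.
    rewrite QE add0r.
    case: Hyp => [DT|H].
    * have : EN = 0.
        rewrite /EN /Exp (bigD1 setT) //= setCT cards0 mulr0 add0r big1 // => S hS.
        have : \sum_(S | S != setT) D S = 0.
          by move: D1; rewrite (bigD1 setT) //= DT => h; lra.
        move/(psumr_eq0P (fun S _ => D0 S)) => h0; by rewrite h0 ?mul0r.
      by move=> e; rewrite e ltxx in SH0.
    * rewrite -mulrA; apply: (le_trans _ (ler_wpM2l (ltW a0) H)).
      by rewrite mulrA aEI divff // gt_eqF.
  + subst th.
    have ind w u : ((s w u == alpha)%:R : R) = (u \in w)%:R.
      by rewrite sE /=; case: (u \in w); rewrite ?mulr1 ?mulr0 ?eqxx // eq_sym gt_eqF.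
    have hSH : SH = ES.
      rewrite /SH /ES /Exp exchange_big /=; apply: eq_bigr => w _.
      rewrite -sum_ind1 mulr_sumr; apply: eq_bigr => u _; by rewrite ind.
    have hSE : SE = alpha * (EI - ES).
      rewrite /SE /EI /ES /Exp -sumrB mulr_sumr exchange_big /=; apply: eq_bigr => w _.
      under eq_bigr => u _ do rewrite ind. rewrite sE /=. under eq_bigr => u _ do rewrite inner.
      rewrite sum_ind_l.
      rewrite (eq_bigr (fun u => alpha * \sum_(v in w) W u v - alpha)); last first.
        by move=> u ->; rewrite Wd mulr1 mul1r.
      rewrite sumrB -mulr_sumr sumr_const -mulr_natr /Induced.
      ring.
    rewrite hSH hSE in SH0 QE.
    have hq x : x + alpha * (EI - ES) / ES = x + 1 - alpha.
      rewrite mulrBr aEI; field; exact: lt0r_neq0.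
    split; first by rewrite QE hq addrAC subrr add0r.
    split; first exact: ltW a0.
    move=> x hx; rewrite QE hq => h; lra.
- by rewrite hcost hcost2.
- by rewrite hcost2; apply: ler_piMl => //; apply: ltW.
Qed.
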